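(* Let $\gamma\in\mathbb Q\cap(0,1)$ and let $\gamma_2$ be its right Farey parent. For every $\beta\in(1,2)$ with $$\mathbf d_\beta\in[\,w_\gamma^\infty,\ w_{\gamma_2}w_\gamma^\infty\,]$$ in the lexicographic order, one has $\gamma(\beta)=\gamma$.
   Context: For $\beta\in(1,2)$, let $\mathbf d_\beta=d_1d_2\dots$ be the quasi-greedy expansion of $1$. It equals the greedy expansion $\tilde d_i=\lfloor\beta T_\beta^{i-1}(1)\rfloor$ of $1$ if that expansion does not end in $0^\infty$. If instead the greedy expansion is $\tilde d_1\dots\tilde d_k0^\infty$ with $\tilde d_k=1$, then $\mathbf d_\beta=(\tilde d_1\dots\tilde d_{k-1}0)^\infty$. The admissible set is $X_\beta=\{(x_i)\in\{0,1\}^{\mathbb N}: x_jx_{j+1}\dots\preceq\mathbf d_\beta\ \forall j\}$, where $\preceq$ is the lexicographic order. Farey tree of words: set $w_{0/1}=0$ and $w_{1/1}=1$. Two fractions $a/b<c/d$ are neighbours if $bc-ad=1$. For neighbours $\gamma_1=a/b<\gamma_2=c/d$, put $\gamma_1\oplus\gamma_2=(a+c)/(b+d)$ and $w_{\gamma_1\oplus\gamma_2}=w_{\gamma_2}w_{\gamma_1}$. Every rational $\gamma\in(0,1)$ arises uniquely as $\gamma=\gamma_1\oplus\gamma_2$ with neighbours $\gamma_1<\gamma_2$; these are its left and right Farey parents. The word $w_\gamma$ is the lexicographically maximal cyclic shift of the cyclically balanced word of length $q$ with $p$ ones, where $\gamma=p/q$. $\gamma(\beta)$: the number $\gamma\in[0,1]$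 associated to the lexicographically maximal admissible balanced sequence. Equivalently, $\gamma(\beta)=\sup\{\gamma\in\mathbb Q\cap[0,1]: w_\gamma^\infty\in X_\beta\}$. It satisfies: $w_\gamma^\infty$ is admissible iff $\gamma\le\gamma(\beta)$. *)

(* Defs.v *)
From Stdlib Require Import Reals Lra Lia Arith List.
Import ListNotations.
Open Scope R_scope.

(* floor on reals: up x is the unique integer with x < up x <= x + 1 *)
Definition rfloor (x : R) : Z := (up x - 1)%Z.

Definition Tb (beta x : R) : R := beta * x - IZR (rfloor (beta * x)).

Fixpoint Titer (beta : R) (n : nat) (x : R) : R :=
  match n with O => x | S k => Tb beta (Titer beta k x) end.

(* greedy expansion of 1, 0-indexed: greedy beta i = d~_{i+1} = floor(beta T^i(1)) *)
Definition greedy (beta : R) (i : nat) : nat :=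
  Z.to_nat (rfloor (beta * Titer beta i 1)).

(* d is the quasi-greedy expansion of 1 in base beta (0-indexed: d 0 = d_1) *)
Definition quasi_greedy (beta : R) (d : nat -> nat) : Prop :=
  ((forall m, exists j, (m < j)%nat /\ greedy beta j <> 0%nat) /\
   (forall n, d n = greedy beta n))
  \/
  (exists m, greedy beta m = 1%nat /\ (forall j, (m < j)%nat -> greedy beta j = 0%nat) /\
     (forall n, d n = (let r := (n mod (S m))%nat in
                       if Nat.eqb r m then 0%nat else greedy beta r))).

Definition lex_le (a b : nat -> nat) : Prop :=
  (forall i, a i = b i) \/
  (exists n, (forall i, (i < n)%nat -> a i = b i) /\ (a n < b n)%nat).

Definition admissible (d : nat -> nat) (x : nat -> nat) : Prop :=
  (forall i, (x i <= 1)%nat) /\ (forall j, lex_le (fun i => x (j + i)%nat) d).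

(* Farey words via descent in the Farey (Stern-Brocot) tree: the current interval
   is a/b < c/d (neighbours) with words wl = w_{a/b}, wr = w_{c/d};
   the mediant word is w_{a/b (+) c/d} = w_{c/d} w_{a/b}. *)
Fixpoint sb (fuel p q a b c d : nat) (wl wr : list nat) : list nat :=
  match fuel with
  | O => []
  | S f =>
      let m1 := (a + c)%nat in let m2 := (b + d)%nat in
      if Nat.eqb (p * m2) (m1 * q) then wr ++ wl
      else if Nat.ltb (p * m2) (m1 * q) then sb f p q a b m1 m2 wl (wr ++ wl)
      else sb f p q m1 m2 c d (wr ++ wl) wr
  end.

Definition farey_word (p q : nat) : list nat :=
  if Nat.eqb p 0 then [0%nat]
  else if Nat.eqb p q then [1%nat]
  else sb q p q 0 1 1 1 [0%nat] [1%nat].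

Definition per (w : list nat) (n : nat) : nat := nth (n mod length w) w 0%nat.

Definition prefix_per (u w : list nat) (n : nat) : nat :=
  if Nat.ltb n (length u) then nth n u 0%nat else per w (n - length u).

Definition admissible_gammas (d : nat -> nat) (x : R) : Prop :=
  exists p q : nat, (0 < q)%nat /\ (p <= q)%nat /\ Nat.gcd p q = 1%nat /\
    x = INR p / INR q /\ admissible d (per (farey_word p q)).

Definition gamma_beta_is (d : nat -> nat) (g : R) : Prop :=
  is_lub (admissible_gammas d) g.

(* Main.v *)
Require Import Defs.
From Stdlib Require Import Reals Arith List.
From Stdlib Require Import Lia Lra Psatz Classical.
Import ListNotations.
Open Scope R_scope.
Section H.
Local Open Scope nat_scope.

Definition Cx (x y i : nat) : nat := (i*x + y - 1) / y.

Lemma Cx_spec x y i : 0 < y -> i*x <= Cx x y i * y /\ Cx x y i * y < i*x + y.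
Proof.
  intros Hy. unfold Cx.
  pose proof (Nat.div_mod (i*x + y - 1) y ltac:(lia)).
  pose proof (Nat.mod_upper_bound (i*x + y - 1) y ltac:(lia)).
  set (Q := (i*x+y-1)/y) in *. set (R := (i*x+y-1) mod y) in *. nia.
Qed.

Lemma Cx_eq x y i k : 0 < y -> i*x <= k*y -> k*y < i*x + y -> Cx x y i = k.
Proof.
  intros Hy H1 H2. unfold Cx. symmetry. apply (Nat.div_unique _ _ _ (i*x + y - 1 - k*y)); nia.
Qed.

Lemma fl_eq n y f : 0 < y -> f*y <= n -> n < f*y + y -> n / y = f.
Proof.
  intros Hy H1 H2. symmetry. apply (Nat.div_unique _ _ _ (n - f*y)); nia.
Qed.

Lemma L1 a b c d i : 1 <= b -> 1 <= d -> b*c = a*d+1 -> i <= d ->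
  Cx (a+c) (b+d) i = Cx c d i.
Proof.
  intros Hb Hd Hn Hi. destruct (Cx_spec c d i ltac:(lia)) as [H1 H2].
  set (k := Cx c d i) in *. apply Cx_eq; [lia| |].
  - nia.
  - nia.
Qed.


Lemma L2 a b c d j : 1 <= b -> 1 <= d -> b*c = a*d+1 -> j <= b ->
  Cx (a+c) (b+d) (d+j) = c + Cx a b j.
Proof.
  intros Hb Hd Hn Hi. destruct (Cx_spec a b j ltac:(lia)) as [H1 H2].
  set (m := Cx a b j) in *. apply Cx_eq; [lia| |].
  - nia.
  - nia.
Qed.

Definition W (x y : nat) : list nat := map (fun i => Cx x y (S i) - Cx x y i) (seq 0 y).

Lemma map_seq_shift (F : nat -> nat) s t n :
  map F (seq (s + t) n) = map (fun j => F (s + j)) (seq t n).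
Proof.
  revert t; induction n; intros t; simpl; auto.
  f_equal. rewrite <- (IHn (S t)). f_equal. f_equal. lia.
Qed.

Lemma W_concat a b c d : 1 <= b -> 1 <= d -> b*c = a*d+1 ->
  W (a+c) (b+d) = W c d ++ W a b.
Proof.
  intros Hb Hd Hn. unfold W. replace (seq 0 (b+d)) with (seq 0 d ++ seq (0+d) b)
    by (rewrite <- seq_app; f_equal; lia).
  rewrite map_app. f_equal.
  - apply map_ext_in. intros i Hi. apply in_seq in Hi.
    rewrite !L1 by lia. reflexivity.
  - rewrite <- (Nat.add_0_r (0+d)). rewrite map_seq_shift.
    apply map_ext_in. intros j Hj. apply in_seq in Hj. simpl.
    replace (S (d+j)) with (d + S j) by lia.
    rewrite !L2 by lia. lia.
Qed.


Lemma sb_ok p q : 0 < p -> p < q -> Nat.gcd p q = 1 ->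
  forall f a b c d, 1 <= b -> 1 <= d -> b*c = a*d + 1 -> a*q < p*b -> p*d < c*q ->
  q + 1 <= f + b + d -> sb f p q a b c d (W a b) (W c d) = W p q.
Proof.
  intros Hp Hpq Hg f. induction f; intros a b c d Hb Hd Hn H1 H2 Hf.
  - exfalso. nia.
  - simpl. rewrite <- W_concat by lia.
    destruct (Nat.eqb_spec (p*(b+d)) ((a+c)*q)) as [E|E].
    + set (t := p*b - a*q).
      assert (Hq : q = (b+d)*t) by (unfold t; nia).
      assert (Hp' : p = (a+c)*t) by (unfold t; nia).
      assert (Ht : Nat.divide t 1).
      { rewrite <- Hg. apply Nat.gcd_greatest.
        - exists (a+c). lia.
        - exists (b+d). lia. }
      apply Nat.divide_1_r in Ht. rewrite Ht in Hq, Hp'.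
      rewrite Hq, Hp', !Nat.mul_1_r. reflexivity.
    + destruct (Nat.ltb_spec (p*(b+d)) ((a+c)*q)) as [L|L].
      * apply IHf; nia.
      * apply IHf; nia.
Qed.

Lemma farey_W p q : 0 < p -> p <= q -> Nat.gcd p q = 1 -> farey_word p q = W p q.
Proof.
  intros Hp Hpq Hg. unfold farey_word.
  destruct (Nat.eqb_spec p 0); [lia|].
  destruct (Nat.eqb_spec p q).
  - subst. rewrite Nat.gcd_diag in Hg. subst. reflexivity.
  - change [0] with (W 0 1). change [1] with (W 1 1).
    apply sb_ok; lia.
Qed.


Lemma W_length x y : length (W x y) = y.
Proof. unfold W. rewrite length_map, length_seq. reflexivity. Qed.

Lemma W_nth x y i : i < y -> nth i (W x y) 0 = Cx x y (S i) - Cx x y i.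
Proof.
  intros H. unfold W.
  rewrite nth_indep with (d' := (fun i => Cx x y (S i) - Cx x y i) 0)
    by (rewrite length_map, length_seq; lia).
  rewrite (map_nth (fun i => Cx x y (S i) - Cx x y i)), seq_nth by lia. reflexivity.
Qed.

Lemma Cx_per x y i k : 0 < y -> Cx x y (i + k*y) = Cx x y i + k*x.
Proof.
  intros Hy. destruct (Cx_spec x y i Hy). apply Cx_eq; nia.
Qed.

Lemma Cx_mono x y i j : 0 < y -> i <= j -> Cx x y i <= Cx x y j.
Proof. intros Hy H. unfold Cx. apply Nat.Div0.div_le_mono; nia. Qed.

Lemma per_W x y n : 0 < y -> per (W x y) n = Cx x y (S n) - Cx x y n.
Proof.
  intros Hy. unfold per. rewrite W_length, W_nth by (apply Nat.mod_upper_bound; lia).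
  pose proof (Nat.div_mod_eq n y).
  set (r := n mod y) in *. set (k := n / y) in *.
  replace n with (r + k*y) by lia. replace (S (r + k*y)) with (S r + k*y) by lia.
  rewrite !Cx_per by lia. lia.
Qed.

Fixpoint psum (x : nat -> nat) (n : nat) : nat :=
  match n with O => 0 | S k => psum x k + x k end.

Lemma psum_X (x X : nat -> nat) : (forall i, X i <= X (S i)) -> X 0 = 0 ->
  (forall i, x i = X (S i) - X i) -> forall n, psum x n = X n.
Proof.
  intros Hm H0 Hx n. induction n; simpl. { auto. } rewrite IHn, (Hx n). specialize (Hm n). lia.
Qed.

Lemma psum_ext x y : (forall i, x i = y i) -> forall n, psum x n = psum y n.
Proof. intros H n. induction n; simpl. { auto. } rewrite IHn, H. auto. Qed.

Lemma first_diff (x y : nat -> nat) N :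
  (forall i, i < N -> x i = y i) \/
  (exists n, n < N /\ (forall i, i < n -> x i = y i) /\ x n <> y n).
Proof.
  induction N.
  - left. intros; lia.
  - destruct IHN as [H|[n [H1 [H2 H3]]]].
    + destruct (Nat.eq_dec (x N) (y N)).
      * left. intros i Hi. destruct (Nat.eq_dec i N); subst; auto. apply H. lia.
      * right. exists N. repeat split; auto.
    + right. exists n. repeat split; auto.
Qed.

Lemma lexA x y : (forall n, psum x n <= psum y n) -> lex_le x y.
Proof.
  intros H. destruct (classic (forall i, x i = y i)) as [E|E]; [left; auto|].
  apply not_all_ex_not in E. destruct E as [i0 Hi0].
  destruct (first_diff x y (S i0)) as [F|[n [_ [H2 H3]]]].
  - exfalso. apply Hi0, F. lia.
  - right. exists n. split; auto.
    assert (psum x n = psum y n).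
    { clear H H3. induction n; simpl; auto. rewrite IHn, H2; auto. }
    specialize (H (S n)). simpl in H. lia.
Qed.

Lemma lex_anti x y : lex_le x y -> lex_le y x -> forall i, x i = y i.
Proof.
  intros [E|[n1 [A1 B1]]] [E'|[n2 [A2 B2]]].
  - auto.
  - exfalso. rewrite E in B2. lia.
  - exfalso. rewrite E' in B1. lia.
  - exfalso. destruct (lt_eq_lt_dec n1 n2) as [[L|L]|L].
    + rewrite A2 in B1 by lia. lia.
    + subst. lia.
    + rewrite A1 in B2 by lia. lia.
Qed.

Lemma lex_trans x y z : lex_le x y -> lex_le y z -> lex_le x z.
Proof.
  intros [E|[n1 [A1 B1]]] [E'|[n2 [A2 B2]]].
  - left. intros i. rewrite E; auto.
  - right. exists n2. split; [intros i Hi; rewrite E; auto| rewrite E; auto].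
  - right. exists n1. split; [intros i Hi; rewrite <- E'; auto| rewrite <- E'; auto].
  - right. destruct (lt_eq_lt_dec n1 n2) as [[L|L]|L].
    + exists n1. split. intros i Hi. rewrite A1, A2 by lia. auto.
      rewrite <- (A2 n1) by lia. auto.
    + subst. exists n2. split. intros i Hi. rewrite A1, A2 by lia. auto. lia.
    + exists n2. split. intros i Hi. rewrite A1, A2 by lia. auto.
      rewrite (A1 n2) by lia. auto.
Qed.

End H.

Lemma main_nat (p q a b c d : nat)
  (hp : (0 < p)%nat) (hpq : (p < q)%nat) (hcop : Nat.gcd p q = 1%nat)
  (hb : (0 < b)%nat) (hd : (0 < d)%nat)
  (hac : (a + c)%nat = p) (hbd : (b + d)%nat = q)
  (hnb : (b * c = a * d + 1)%nat)
  (dbeta : nat -> nat)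
  (hlo : lex_le (per (farey_word p q)) dbeta)
  (hhi : lex_le dbeta (prefix_per (farey_word c d) (farey_word p q))) :
  admissible dbeta (per (farey_word p q)) /\
  forall p' q', (0 < q')%nat -> (p' <= q')%nat -> Nat.gcd p' q' = 1%nat ->
     admissible dbeta (per (farey_word p' q')) -> (p' * q <= p * q')%nat.
Proof.
  assert (Hcd : (1 <= c <= d)%nat) by nia.
  assert (Hgcd : Nat.gcd c d = 1%nat).
  { apply Nat.divide_1_r. apply (Nat.divide_add_cancel_r _ (a*d)).
    - apply Nat.divide_mul_r. apply Nat.gcd_divide_r.
    - rewrite <- hnb. apply Nat.divide_mul_r. apply Nat.gcd_divide_l. }
  assert (Hcq : (c*q = d*p + 1)%nat) by (subst; nia).
  rewrite (farey_W p q) in * by lia.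
  rewrite (farey_W c d) in * by lia.
  set (P := Cx p q).
  assert (Hper : forall n, per (W p q) n = (P (S n) - P n)%nat) by (intros; apply per_W; lia).
  assert (HPm : forall i j, (i <= j)%nat -> (P i <= P j)%nat) by (intros; apply Cx_mono; lia).
  split.
  - split.
    + intros i. rewrite Hper. destruct (Cx_spec p q i), (Cx_spec p q (S i)); try lia.
      unfold P. nia.
    + intros j. eapply lex_trans; [|exact hlo]. apply lexA. intros n.
      rewrite (psum_X _ (fun i => P (j+i) - P j)%nat).
      * rewrite (psum_X _ P).
        -- destruct (Cx_spec p q j), (Cx_spec p q n), (Cx_spec p q (j+n)); try lia.
           unfold P in *. nia.
        -- intros; apply HPm; lia.
        -- unfold P, Cx. apply Nat.div_small. lia.
        -- auto.
      * intros i. pose proof (HPm (j+i)%nat (j + S i)%nat ltac:(lia)). pose proof (HPm j (j+i)%nat ltac:(lia)). lia.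
      * cbv beta. rewrite Nat.add_0_r. lia.
      * intros i. rewrite Hper. replace (j + S i)%nat with (S (j+i)) by lia.
        pose proof (HPm (j+i)%nat (S (j + i)) ltac:(lia)). pose proof (HPm j (j+i)%nat ltac:(lia)). lia.
  - intros p' q' Hq' Hpq' Hg' [_ Hadm].
    destruct (le_lt_dec (p'*q) (p*q')) as [Hle|Hlt]; [exact Hle|exfalso].
    assert (Hp' : (0 < p')%nat) by nia.
    rewrite (farey_W p' q') in Hadm by lia.
    set (P' := Cx p' q') in *.
    assert (Hper' : forall n, per (W p' q') n = (P' (S n) - P' n)%nat) by (intros; apply per_W; lia).
    set (Zf := fun n => match n with O => O | S _ => n*p/q + 1 end%nat).
    assert (HZm : forall i, (Zf i <= Zf (S i))%nat).
    { intros [|i]; unfold Zf; cbv beta iota; [lia|]. pose proof (Nat.Div0.div_le_mono (S i * p) (S (S i) * p) q ltac:(nia)). lia. }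
    assert (Hz : forall n, prefix_per (W c d) (W p q) n = (Zf (S n) - Zf n)%nat).
    { intros n. unfold prefix_per. rewrite W_length.
      assert (C1 : forall m, (m <= d)%nat -> Cx c d m = Zf m).
      { intros [|m] Hm; [unfold Cx; simpl; apply Nat.div_small; lia|].
        destruct (Cx_spec c d (S m)) as [H1 H2]; [lia|].
        assert (Hk : (1 <= Cx c d (S m))%nat) by nia.
        unfold Zf; cbv beta iota.
        set (M := S m) in *. set (k := Cx c d M) in *.
        assert (HMq : (M < q)%nat) by lia.
        rewrite (fl_eq _ _ (k - 1)); try lia.
        * set (X := (k-1)%nat).
          assert (A1 : (X*d + 1 <= M*c)%nat) by (unfold X; nia).
          assert (A2 : (q*(X*d) + q <= q*(M*c))%nat) by nia.
          assert (A3 : (q*(M*c) = M*(d*p) + M)%nat) by nia.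
          assert (A4 : (d*(X*q) <= d*(M*p))%nat) by nia.
          apply (proj2 (Nat.mul_le_mono_pos_l _ _ d ltac:(lia))). exact A4.
        * assert (A1 : (M*c <= k*d)%nat) by lia.
          assert (A2 : (q*(M*c) <= q*(k*d))%nat) by nia.
          assert (A3 : (q*(M*c) = M*(d*p) + M)%nat) by nia.
          assert (A4 : (d*(M*p) < d*(k*q))%nat) by nia.
          replace ((k-1)*q+q)%nat with (k*q)%nat by nia.
          apply (proj2 (Nat.mul_lt_mono_pos_l d _ _ ltac:(lia))). exact A4. }
      assert (C2 : forall m, Zf (d + m)%nat = (c + P m)%nat).
      { intros m. destruct (Cx_spec p q m) as [H1 H2]; [lia|]. fold P in H1, H2.
        assert (EZ : Zf (d+m)%nat = ((d+m)*p/q + 1)%nat) by (destruct d; [lia|reflexivity]).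
        rewrite EZ.
        rewrite (fl_eq _ _ (c + P m - 1)); try lia; nia. }
      destruct (Nat.ltb_spec n d).
      + rewrite W_nth by lia. rewrite !C1 by lia. reflexivity.
      + rewrite Hper. replace (S n) with (d + S (n - d))%nat by lia.
        assert (Zf n = c + P (n-d))%nat by (rewrite <- C2; f_equal; lia).
        rewrite (C2 (S (n-d))). lia. }
    assert (HpsZ : forall n, psum (prefix_per (W c d) (W p q)) n = Zf n).
    { apply psum_X; auto. }
    assert (HpsP : forall n, psum (per (W p' q')) n = P' n).
    { apply psum_X; auto.
      - intros; apply Cx_mono; lia.
      - unfold P', Cx. apply Nat.div_small. lia. }
    assert (Hle : lex_le (prefix_per (W c d) (W p q)) (per (W p' q'))).
    { apply lexA. intros n. rewrite HpsZ, HpsP.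
      destruct n as [|n]; [simpl; lia|].
      unfold Zf; cbv beta iota. destruct (Cx_spec p' q' (S n)) as [H1 H2]; [lia|]. fold P' in H1, H2.
      pose proof (Nat.Div0.mul_div_le (S n * p) q).
      set (f := (S n * p / q)%nat) in *. set (k := P' (S n)) in *.
      assert (S n * p * q' < S n * p' * q)%nat by nia.
      destruct (le_lt_dec k f); [|lia]. exfalso.
      assert (k*q <= f*q)%nat by nia.
      assert (k*q*q' <= S n * p * q')%nat by nia.
      assert (S n * p' * q <= k*q'*q)%nat by nia.
      nia. }
    assert (Hge : lex_le (per (W p' q')) (prefix_per (W c d) (W p q))).
    { eapply lex_trans; [|exact hhi]. exact (Hadm 0%nat). }
    pose proof (lex_anti _ _ Hge Hle) as Heq.
    pose proof (psum_ext _ _ Heq) as Hs.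
    assert (E1 := Hs (q*q')%nat). assert (E2 := Hs (2*q*q')%nat).
    rewrite HpsZ, HpsP in E1, E2.
    assert (F1 : P' (q*q')%nat = (q*p')%nat) by (apply Cx_eq; nia).
    assert (F2 : P' (2*q*q')%nat = (2*q*p')%nat) by (apply Cx_eq; nia).
    assert (G1 : Zf (q*q')%nat = (q'*p+1)%nat).
    { unfold Zf. destruct (q*q')%nat eqn:Eq; [nia|]. rewrite <- Eq.
      rewrite (fl_eq _ _ (q'*p)); nia. }
    assert (G2 : Zf (2*q*q')%nat = (2*q'*p+1)%nat).
    { unfold Zf. destruct (2*q*q')%nat eqn:Eq; [nia|]. rewrite <- Eq.
      rewrite (fl_eq _ _ (2*q'*p)); nia. }
    lia.
Qed.

Theorem mainTheorem2 (p q a b c d : nat)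
  (hp : (0 < p)%nat) (hpq : (p < q)%nat) (hcop : Nat.gcd p q = 1%nat)
  (hb : (0 < b)%nat) (hd : (0 < d)%nat)
  (hac : (a + c)%nat = p) (hbd : (b + d)%nat = q)
  (hnb : (b * c = a * d + 1)%nat)
  (beta : R) (hbeta1 : 1 < beta) (hbeta2 : beta < 2)
  (dbeta : nat -> nat) (hq : quasi_greedy beta dbeta)
  (hlo : lex_le (per (farey_word p q)) dbeta)
  (hhi : lex_le dbeta (prefix_per (farey_word c d) (farey_word p q))) :
  gamma_beta_is dbeta (INR p / INR q).
Proof.
  destruct (main_nat p q a b c d hp hpq hcop hb hd hac hbd hnb dbeta hlo hhi) as [Hadm Hub].
  split.
  - intros x [p' [q' [Hq' [Hpq' [Hg' [Hx Ha]]]]]]. subst x.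
    pose proof (Hub p' q' Hq' Hpq' Hg' Ha) as H.
    assert (Hr : INR p' * INR q <= INR p * INR q') by (rewrite <- !mult_INR; apply le_INR; exact H).
    assert (0 < INR q) by (apply lt_0_INR; lia).
    assert (0 < INR q') by (apply lt_0_INR; lia).
    apply (Rmult_le_reg_r (INR q * INR q')); [nra|].
    replace (INR p' / INR q' * (INR q * INR q')) with (INR p' * INR q) by (field; lra).
    replace (INR p / INR q * (INR q * INR q')) with (INR p * INR q') by (field; lra).
    exact Hr.
  - intros ub Hub'. apply Hub'. exists p, q. split; [lia|]. split; [lia|]. split; [exact hcop|]. split; [reflexivity|exact Hadm].
Qed.
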